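(* Let $n\ge1$ and $0\le \bar s\le n$. Then $$\max\Big\{\prod_{i=1}^n(1+z_i^2)\ :\ z_1,\dots,z_n\in[0,1],\ \sum_{i=1}^n z_i=\bar s\Big\}=2^{\lfloor \bar s\rfloor}\big[1+(\bar s-\lfloor\bar s\rfloor)^2\big],$$ equivalently the maximum of $1+\sum_{k=1}^n\sum_{1\le i_1<\cdots<i_k\le n}z_{i_1}^2\cdots z_{i_k}^2$ over this set equals the same value.
   Context: $\lfloor x\rfloor$ denotes the greatest integer less than or equal to $x$. *)

(* Defs.v *)
From Stdlib Require Import Reals.
Open Scope R_scope.

Fixpoint rsum (z : nat -> R) (n : nat) : R :=
  match n with O => 0 | S k => rsum z k + z k end.

Fixpoint rprod (f : nat -> R) (n : nat) : R :=
  match n with O => 1 | S k => rprod f k * f k end.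

(* floor of a real: Int_part x = up x - 1 is the greatest integer <= x. *)
Definition rfloor (x : R) : Z := Int_part x.

(* Main.v *)
Require Import Defs.
From Stdlib Require Import Reals Lra Lia Psatz ZArith.
Open Scope R_scope.

Definition g (s : R) := powerRZ 2 (rfloor s) * (1 + (s - IZR (rfloor s)) ^ 2).

Lemma floor_unique (k : Z) (x : R) : IZR k <= x < IZR k + 1 -> rfloor x = k.
Proof.
  intros [H1 H2]. unfold rfloor, Int_part.
  rewrite <- (tech_up x (k+1)); [ring| rewrite plus_IZR; simpl; lra | rewrite plus_IZR; simpl; lra].
Qed.

Lemma floor_spec (x : R) : IZR (rfloor x) <= x < IZR (rfloor x) + 1.
Proof. unfold rfloor. destruct (base_Int_part x). lra. Qed.

Lemma pow2S (k : Z) : powerRZ 2 (k + 1) = 2 * powerRZ 2 k.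
Proof. rewrite powerRZ_add by lra. simpl. ring. Qed.

Lemma g_step (S z : R) : 0 <= z <= 1 -> g S * (1 + z ^ 2) <= g (S + z).
Proof.
  intros Hz. unfold g. destruct (floor_spec S) as [H1 H2].
  set (k := rfloor S) in *. set (f := S - IZR k).
  assert (HP : 0 < powerRZ 2 k) by (apply powerRZ_lt; lra).
  destruct (Rlt_or_le (f + z) 1) as [Hc|Hc].
  - rewrite (floor_unique k (S+z)) by (unfold f in *; lra).
    replace (S + z - IZR k) with (f + z) by (unfold f; ring).
    rewrite Rmult_assoc. apply Rmult_le_compat_l; [lra|].
    assert (0 <= f) by (unfold f; lra). assert (f * z <= 1) by nra. assert (0 <= f*z) by nra. assert ((f*z)*(f*z) <= 2*(f*z)) by nra. nra.
  - rewrite (floor_unique (k+1) (S+z)) by (rewrite plus_IZR; unfold f in *; simpl; lra).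
    rewrite pow2S, plus_IZR.
    replace (S + z - (IZR k + IZR 1)) with (f + z - 1) by (unfold f; simpl; ring).
    assert (0 <= f < 1) by (unfold f; lra).
    assert (0 <= (1 - z) * (1 - f) * ((3 - z) - (1 + z) * f)).
    { apply Rmult_le_pos; [apply Rmult_le_pos; lra|nra]. }
    assert (Key : (1+f^2)*(1+z^2) <= 2*(1+(f+z-1)^2)) by nra.
    replace (2 * powerRZ 2 k * (1 + (f + z - 1) ^ 2)) with (powerRZ 2 k * (2 * (1 + (f + z - 1) ^ 2))) by ring.
    rewrite Rmult_assoc. apply Rmult_le_compat_l; lra.
Qed.

Lemma g_plus1 (s : R) : g (s + 1) = 2 * g s.
Proof.
  unfold g. destruct (floor_spec s).
  rewrite (floor_unique (rfloor s + 1) (s+1)) by (rewrite plus_IZR; simpl; lra).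
  rewrite pow2S, plus_IZR. simpl. ring.
Qed.

Lemma g_small (s : R) : 0 <= s < 1 -> g s = 1 + s ^ 2.
Proof.
  intros H. unfold g. rewrite (floor_unique 0 s) by (simpl; lra). simpl. ring.
Qed.

Lemma upper (n : nat) : forall z : nat -> R,
  (forall i, (i < n)%nat -> 0 <= z i <= 1) ->
  rprod (fun i => 1 + z i ^ 2) n <= g (rsum z n).
Proof.
  induction n as [|n IH]; intros z Hz; simpl.
  - rewrite g_small by lra. lra.
  - eapply Rle_trans; [|apply g_step; apply Hz; lia].
    apply Rmult_le_compat_r. nra. apply IH. intros; apply Hz; lia.
Qed.

Lemma rsum_ext n z w : (forall i, (i < n)%nat -> z i = w i) -> rsum z n = rsum w n.
Proof. induction n; intros H; simpl; auto. rewrite IHn, H; auto. Qed.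

Lemma rprod_ext n z w : (forall i, (i < n)%nat -> z i = w i) ->
  rprod (fun i => 1 + z i ^ 2) n = rprod (fun i => 1 + w i ^ 2) n.
Proof. induction n; intros H; cbn [rprod]; auto. rewrite IHn, H; auto. Qed.

Lemma exist_z (n : nat) : forall s, 0 <= s <= INR n -> exists z : nat -> R,
      (forall i, (i < n)%nat -> 0 <= z i <= 1) /\ rsum z n = s /\
      rprod (fun i => 1 + z i ^ 2) n = g s.
Proof.
  induction n as [|n IH]; intros s Hs.
  - simpl in Hs. exists (fun _ => 0). simpl. split; [intros; lia|].
    split; [lra|]. assert (s = 0) by lra. subst. rewrite g_small by lra. ring.
  - rewrite S_INR in Hs.
    set (t := Rmin s 1).
    assert (Ht : 0 <= t <= 1 /\ 0 <= s - t <= INR n).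
    { pose proof (pos_INR n). unfold t; destruct (Rle_dec s 1); [rewrite Rmin_left|rewrite Rmin_right]; lra. }
    destruct (IH (s - t) (proj2 Ht)) as [z [Hz1 [Hz2 Hz3]]].
    exists (fun i => if Nat.eqb i n then t else z i).
    assert (E : forall i, (i < n)%nat -> (if Nat.eqb i n then t else z i) = z i).
    { intros i Hi. destruct (Nat.eqb_spec i n); [lia|auto]. }
    split; [|split].
    + intros i Hi. destruct (Nat.eqb_spec i n); [lra|apply Hz1; lia].
    + cbn [rsum]. rewrite (rsum_ext n _ z E), Nat.eqb_refl. lra.
    + cbn [rprod]. rewrite (rprod_ext n _ z E), Nat.eqb_refl, Hz3.
      unfold t; destruct (Rle_dec s 1); [rewrite Rmin_left by lra|rewrite Rmin_right by lra].
      * replace (s - s) with 0 by ring. destruct (Rlt_or_le s 1).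
        -- rewrite !g_small by lra. ring.
        -- assert (s = 1) by lra. subst s. replace 1 with (0 + 1) at 3 by ring.
           rewrite g_plus1. ring.
      * replace s with ((s - 1) + 1) at 2 by ring. rewrite g_plus1. ring.
Qed.

(* Indices i = 0..n-1 stand for 1..n.  "max = v" is stated as: the value v
   is attained at a feasible point, and bounds the objective on the set. *)
Theorem mainTheorem11 (n : nat) (s : R) :
  (1 <= n)%nat -> 0 <= s -> s <= INR n ->
  (exists z : nat -> R,
      (forall i, (i < n)%nat -> 0 <= z i <= 1) /\ rsum z n = s /\
      rprod (fun i => 1 + z i ^ 2) n
        = powerRZ 2 (rfloor s) * (1 + (s - IZR (rfloor s)) ^ 2)) /\
  (forall z : nat -> R,
      (forall i, (i < n)%nat -> 0 <= z i <= 1) -> rsum z n = s ->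
      rprod (fun i => 1 + z i ^ 2) n
        <= powerRZ 2 (rfloor s) * (1 + (s - IZR (rfloor s)) ^ 2)).
Proof.
  intros _ H0 H1. split.
  - apply (exist_z n s). lra.
  - intros z Hz Hs. rewrite <- Hs. apply upper; auto.
Qed.
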